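(* Let $\rho_{A^nB^n}$ be a positive semidefinite operator on $(\mathbb{C}^{d_Ad_B})^{\otimes n}$ that is permutation-invariant and IID-block-diagonal with respect to orthogonal projections $\{\Pi_i\}_{i=1}^k$ on $\mathbb{C}^{d_Ad_B}$ of ranks $\{d_i\}_{i=1}^k$. Then there exists a purification $|\Psi\rangle\in(\mathbb{C}^{d_Ad_B}\otimes\mathbb{C}^{d_Ad_B})^{\otimes n}$ of $\rho_{A^nB^n}$ supported on $\mathrm{Sym}^n\big(\bigoplus_{i=1}^k\mathbb{C}^{d_i}\otimes\mathbb{C}^{d_i}\big)$, where $\bigoplus_{i=1}^k\mathbb{C}^{d_i}\otimes\mathbb{C}^{d_i}$ denotes the subspace $\bigoplus_{i=1}^k\mathrm{range}(\Pi_i)\otimes\mathrm{range}(\overline{\Pi_i})$ of $\mathbb{C}^{d_Ad_B}\otimes\mathbb{C}^{d_Ad_B}$ (complex conjugation taken in a fixed basis).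
   Context: An operator $\rho$ on $(\mathbb{C}^{d_Ad_B})^{\otimes n}$ is permutation-invariant if $P_\pi\rho P_\pi^\dagger=\rho$ for all $\pi\in S_n$, with $P_\pi$ the unitary permuting the $n$ tensor factors. Given orthogonal projections $\{\Pi_i\}_{i=1}^k$ on $\mathbb{C}^{d_Ad_B}$, $\rho$ is IID-block-diagonal if $\rho=\sum_{\vec{j}\in[k]^n}\Pi_{\vec{j}}\rho\Pi_{\vec{j}}$ where $\Pi_{\vec j}=\Pi_{j_1}\otimes\cdots\otimes\Pi_{j_n}$. $\mathrm{Sym}^n(V)$ is the symmetric subspace of $V^{\otimes n}$, with $V^{\otimes n}$ viewed inside $(\mathbb{C}^{d_Ad_B}\otimes\mathbb{C}^{d_Ad_B})^{\otimes n}$; the purification is with respect to the second factor of each pair (i.e. tracing out the $n$ purifying copies of $\mathbb{C}^{d_Ad_B}$ gives $\rho$). *)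

(* Defs.v *)
(* Scalars: an arbitrary numeric closed field C (e.g. the
   complex numbers); conjugation is conjC. *)
From mathcomp Require Import all_boot all_order all_algebra.
From mathcomp Require Import perm.
From mathcomp Require Import sesquilinear spectral.
Set Implicit Arguments. Unset Strict Implicit. Unset Printing Implicit Defensive.
Import Order.TTheory GRing.Theory Num.Theory.
Local Open Scope ring_scope.

Section Defs.
Variable C : numClosedFieldType.

(* Basis index of (C^D)^{\otimes n}: a word x : 'I_n -> 'I_D. *)
Definition word (D n : nat) := {ffun 'I_n -> 'I_D}.
(* Basis index of (C^D \otimes C^D)^{\otimes n}: each tensor factor is a pair
   (system index, purifying index). *)
Definition pword (D n : nat) := {ffun 'I_n -> 'I_D * 'I_D}.

(* An operator on a space with basis X is given by its matrix entries. *)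
Definition psd (X : finType) (rho : X -> X -> C) : Prop :=
  forall v : X -> C, 0 <= \sum_(x : X) \sum_(y : X) (v x)^* * rho x y * v y.

(* Permutation of tensor factors: (P_pi) acting on basis words. *)
Definition permw (T : Type) (n : nat) (s : 'S_n) (x : {ffun 'I_n -> T}) :
  {ffun 'I_n -> T} := [ffun i => x (s i)].

(* P_pi rho P_pi^dagger = rho for all pi, written entrywise. *)
Definition perm_invariant (D n : nat) (rho : word D n -> word D n -> C) : Prop :=
  forall (s : 'S_n) (x y : word D n), rho (permw s x) (permw s y) = rho x y.

Definition orth_proj (D : nat) (P : 'M[C]_D) : Prop :=
  P *m P = P /\ map_mx (fun z : C => z^*) (P ^T) = P .

(* Pi_j = Pi_{j_1} \otimes ... \otimes Pi_{j_n}, entrywise. *)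
Definition tens_proj (D n k : nat) (Pi : 'I_k -> 'M[C]_D) (j : {ffun 'I_n -> 'I_k})
  (x y : word D n) : C := \prod_(i < n) Pi (j i) (x i) (y i).

(* rho = sum_{j in [k]^n} Pi_j rho Pi_j *)
Definition iid_block_diag (D n k : nat) (Pi : 'I_k -> 'M[C]_D)
  (rho : word D n -> word D n -> C) : Prop :=
  forall x y : word D n,
    rho x y = \sum_(j : {ffun 'I_n -> 'I_k}) \sum_(z : word D n) \sum_(w : word D n)
                 tens_proj Pi j x z * rho z w * tens_proj Pi j w y.

Definition pairw (D n : nat) (x u : word D n) : pword D n := [ffun i => (x i, u i)].

(* Psi purifies rho: tracing out the second factor of each pair of |Psi><Psi|
   gives rho. *)
Definition purifies (D n : nat) (Psi : pword D n -> C) (rho : word D n -> word D n -> C)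
  : Prop :=
  forall x y : word D n,
    rho x y = \sum_(u : word D n) Psi (pairw x u) * (Psi (pairw y u))^*.

Definition in_span (X : Type) (S : (X -> C) -> Prop) (v : X -> C) : Prop :=
  exists (m : nat) (c : 'I_m -> C) (f : 'I_m -> X -> C),
    (forall l, S (f l)) /\ forall x, v x = \sum_(l < m) c l * f l x.

Definition in_range (D : nat) (P : 'M[C]_D) (v : 'I_D -> C) : Prop :=
  exists w : 'I_D -> C, forall a, v a = \sum_(b < D) P a b * w b.

Definition tens2 (D : nat) (u v : 'I_D -> C) : 'I_D * 'I_D -> C :=
  fun p => u p.1 * v p.2.

(* V = (+)_i range(Pi_i) \otimes range(conj Pi_i) inside C^D \otimes C^D:
   the span of all u \otimes v with u in range Pi_i, v in range (conj Pi_i). *)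
Definition in_V (D k : nat) (Pi : 'I_k -> 'M[C]_D) (w : 'I_D * 'I_D -> C) : Prop :=
  in_span (fun t => exists (i : 'I_k) (u v : 'I_D -> C),
             in_range (Pi i) u /\ in_range (map_mx (fun z : C => z^*) (Pi i)) v /\ t = tens2 u v) w.

Definition tensn (D n : nat) (f : 'I_n -> 'I_D * 'I_D -> C) : pword D n -> C :=
  fun a => \prod_(i < n) f i (a i).

Definition in_tensor_power (D n k : nat) (Pi : 'I_k -> 'M[C]_D) (Psi : pword D n -> C)
  : Prop :=
  in_span (fun t => exists f : 'I_n -> 'I_D * 'I_D -> C,
             (forall i, in_V Pi (f i)) /\ t = tensn f) Psi.

Definition in_Sym (D n k : nat) (Pi : 'I_k -> 'M[C]_D) (Psi : pword D n -> C) : Prop :=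
  in_tensor_power Pi Psi /\ forall (s : 'S_n) (a : pword D n), Psi (permw s a) = Psi a.

End Defs.

(* Main.v *)
Require Import Defs.
From mathcomp Require Import all_boot all_order all_algebra.
From mathcomp Require Import perm.
From mathcomp Require Import sesquilinear spectral.
From mathcomp Require Import ring.
Import Order.TTheory GRing.Theory Num.Theory Num.Def.
Local Open Scope ring_scope.
Set Implicit Arguments. Unset Strict Implicit. Unset Printing Implicit Defensive.

Section Core.
Variable C : numClosedFieldType.
Local Open Scope sesquilinear_scope.

Definition bf N (R : 'M[C]_N) (u w : 'cV[C]_N) : C := (u^t* *m R *m w) 0 0.
Definition psdm N (R : 'M[C]_N) := forall v, 0 <= bf R v v.

Lemma bfDr N (R : 'M[C]_N) u w1 w2 : bf R u (w1 + w2) = bf R u w1 + bf R u w2.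
Proof. by rewrite /bf mulmxDr mxE. Qed.
Lemma bfDl N (R : 'M[C]_N) u1 u2 w : bf R (u1 + u2) w = bf R u1 w + bf R u2 w.
Proof. by rewrite /bf linearD /= map_mxD !mulmxDl mxE. Qed.
Lemma bfZr N (R : 'M[C]_N) u t w : bf R u (t *: w) = t * bf R u w.
Proof. by rewrite /bf -scalemxAr mxE. Qed.
Lemma bfZl N (R : 'M[C]_N) u t w : bf R (t *: u) w = t^* * bf R u w.
Proof. by rewrite /bf linearZ /= map_mxZ -!scalemxAl mxE. Qed.
Lemma delta_tC N (a : 'I_N) : (delta_mx a 0 : 'cV[C]_N)^t* = delta_mx 0 a.
Proof.
apply/matrixP => i j; rewrite !mxE.
by case: (_ == _); case: (_ == _); rewrite /= ?conjC1 ?conjC0.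
Qed.

Lemma bf_delta N (R : 'M[C]_N) a b : bf R (delta_mx a 0) (delta_mx b 0) = R a b.
Proof.
rewrite /bf.
have -> : (delta_mx a 0 : 'cV[C]_N)^t* = delta_mx 0 a.
  apply/matrixP => i j; rewrite !mxE.
  by case: (_ == _); case: (_ == _); rewrite /= ?conjC1 ?conjC0.
by rewrite -rowE -colE !mxE.
Qed.

Lemma psdm_herm N (R : 'M[C]_N) : psdm R -> forall a b, (R b a)^* = R a b.
Proof.
move=> H a b.
have key : forall t : C, 0 <= R a a + t * R a b + t^* * R b a + t^* * t * R b b.
  move=> t; have := H (delta_mx a 0 + t *: delta_mx b 0).
  rewrite !bfDl !bfDr !bfZl !bfZr !bf_delta.
  by rewrite -!mulrA addrA.
have r0 : forall x : C, 0 <= x -> x^* = x by move=> x /geC0_conj.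
have Haa := r0 _ (key 0).
rewrite conjC0 !mul0r !addr0 in Haa.
have := key 1; have := key 'i.
rewrite conjC1 !mul1r => /r0 Hi /r0 H1.
have Hbb : (R b b)^* = R b b.
  apply: r0; have := H (delta_mx b 0); by rewrite bf_delta.
set X := R a b in H1 Hi *; set Y := R b a in H1 Hi *.
have e1 : X^* + Y^* - (X + Y) = 0.
  have -> : X^* + Y^* - (X + Y) = (R a a + X + Y + R b b)^* - (R a a + X + Y + R b b)
     - ((R a a)^* - R a a) - ((R b b)^* - R b b) by rewrite !rmorphD /=; ring.
  by rewrite H1 Haa Hbb !subrr ?subr0.
have e2 : - 'i * (X^* - Y^* + X - Y) = 0.
  set st := (R a a + 'i * X + 'i^* * Y + 'i^* * 'i * R b b).
  have -> : - 'i * (X^* - Y^* + X - Y) = st^* - st - ((R a a)^* - R a a)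
     - ('i * 'i^* ) * ((R b b)^* - R b b).
    rewrite /st !rmorphD !rmorphM /= conjCK !conjCi. ring.
  by rewrite Hi Haa Hbb !subrr ?mulr0 ?subr0.
move/eqP: e2; rewrite mulf_eq0 oppr_eq0 (negbTE (neq0Ci C)) /= => /eqP e2.
have : 2 * Y^* = 2 * X.
  have -> : 2 * Y^* = (X^* + Y^* - (X + Y)) - (X^* - Y^* + X - Y) + 2 * X by ring.
  by rewrite e1 e2 subrr add0r.
move/mulfI; apply; by rewrite pnatr_eq0.
Qed.

Lemma psdm_trC N (R : 'M[C]_N) : psdm R -> R^t* = R.
Proof. by move=> H; apply/matrixP => i j; rewrite !mxE psdm_herm. Qed.

Lemma bf_sym N (R : 'M[C]_N) u w : R^t* = R -> bf R u w = (bf R w u)^*.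
Proof.
move=> HR; rewrite /bf.
have E : (w^t* *m R *m u)^t* = u^t* *m R *m w.
  by rewrite !trmx_mul !map_mxM /= HR trmxCK mulmxA.
by rewrite -E !mxE.
Qed.

Lemma psdm_null N (R : 'M[C]_N) v : psdm R -> bf R v v = 0 -> R *m v = 0.
Proof.
move=> H Hv; have HR := psdm_trC H.
apply/matrixP => a j; rewrite (ord1 j) {j} [RHS]mxE.
set c := (R *m v) a 0.
set e : 'cV[C]_N := delta_mx a 0.
have Hev : bf R e v = c.
  by rewrite /bf /e delta_tC -mulmxA -rowE [LHS]mxE.
have Hve : bf R v e = c^* by rewrite bf_sym // Hev.
have Hee : bf R e e = R a a by rewrite bf_delta.
have Raa0 : 0 <= R a a by rewrite -Hee; apply: H.
have Raar : (R a a)^* = R a a by apply: geC0_conj.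
have := H ((R a a + 1) *: v - c *: e).
rewrite !bfDl !bfDr !bfZl !bfZr -!scaleN1r !bfZl !bfZr Hv Hev Hve Hee.
rewrite !rmorphD /= rmorphN1 rmorph1 Raar.
set q := (X in 0 <= X -> _).
have -> : q = - ((c * c^* ) * (R a a + 2)) by rewrite /q; ring.
rewrite oppr_ge0 pmulr_lle0; last by rewrite ltr_wpDl.
move=> Hm; apply/eqP; rewrite -mul_conjC_eq0 eq_le Hm mul_conjC_ge0 //.
Qed.

Lemma psdm_sqrt N (R : 'M[C]_N) : psdm R -> exists S : 'M[C]_N,
  [/\ S *m S^t* = R,
      forall M, M *m R = R *m M -> M *m S = S *m M &
      forall T : 'M[C]_N, T *m R = 0 -> T *m S = 0].
Proof.
move=> H; have HR := psdm_trC H.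
have Rn : R \is normalmx by apply/normalmxP; rewrite HR.
have := orthomx_spectralP Rn.
set P := spectralmx R; set d := spectral_diag R => RE.
have Pu : P \is unitarymx := spectral_unitarymx R.
rewrite invmx_unitary // in RE.
have PPt : P *m P^t* = 1%:M by apply/unitarymxP.
have PtP : P^t* *m P = 1%:M by rewrite -[P^t*]mul1mx mulmxKtV.
have DE : diag_mx d = P *m R *m P^t*.
  by rewrite RE !mulmxA PPt mul1mx mulmxtVK.
have d0 : forall i, 0 <= d 0 i.
  move=> i; have := H (P^t* *m delta_mx i 0).
  have -> : bf R (P^t* *m delta_mx i 0) (P^t* *m delta_mx i 0) = diag_mx d i i.
    rewrite /bf trmx_mul map_mxM /= trmxCK delta_tC DE.
    by rewrite !mulmxA -colE [LHS]mxE -!mulmxA -rowE [LHS]mxE.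
  by rewrite mxE eqxx mulr1n.
set s : 'rV[C]_N := \row_i sqrtC (d 0 i).
have sR : (diag_mx s)^t* = diag_mx s.
  apply/matrixP => i j; rewrite !mxE eq_sym.
  case: eqP => [->|_]; rewrite ?mulr1n ?mulr0n ?conjC0 //.
  by rewrite geC0_conj // sqrtC_ge0.
have ss : diag_mx s *m diag_mx s = diag_mx d.
  rewrite mulmx_diag; congr diag_mx; apply/rowP => i; rewrite !mxE.
  by rewrite -expr2 sqrtCK.
exists (P^t* *m diag_mx s *m P); split.
- rewrite !trmx_mul !map_mxM /= trmxCK sR.
  by rewrite !mulmxA mulmxtVK // -(mulmxA (P^t*)) ss RE.
- move=> M HM.
  have [M' M'E] : {M' | M' = P *m M *m P^t*} by eexists.
  have E1 : M' *m diag_mx d = diag_mx d *m M'.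
    by rewrite M'E DE !mulmxA !mulmxKtV // -(mulmxA P M R) HM !mulmxA.
  have E2 : M' *m diag_mx s = diag_mx s *m M'.
    rewrite mul_mx_diag mul_diag_mx in E1.
    rewrite mul_mx_diag mul_diag_mx. 
    apply/matrixP => a b; move/matrixP: E1 => /(_ a b).
    rewrite !mxE mulrC => E.
    have [->|nz] := eqVneq (M' a b) 0; first by rewrite mulr0 mul0r.
    by rewrite mulrC (mulIf nz E).
  have ME : M = P^t* *m M' *m P by rewrite M'E !mulmxA PtP mul1mx mulmxKtV.
  rewrite ME !mulmxA !mulmxtVK // -(mulmxA (P^t*) M') E2.
  by rewrite !mulmxA.
- move=> T HT.
  have E1 : T *m P^t* *m diag_mx d = 0.
    by rewrite DE !mulmxA mulmxKtV // HT !mul0mx.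
  have E2 : T *m P^t* *m diag_mx s = 0.
    rewrite mul_mx_diag in E1; rewrite mul_mx_diag.
    apply/matrixP => a b; move/matrixP: E1 => /(_ a b).
    rewrite !mxE => /eqP; rewrite mulf_eq0 => /orP [/eqP ->|/eqP ->].
      by rewrite mul0r.
    by rewrite sqrtC0 mulr0.
  by rewrite !mulmxA E2 mul0mx.
Qed.

Lemma bf_sumR N (I : finType) (P : pred I) (F : I -> 'M[C]_N) u v :
  bf (\sum_(i | P i) F i) u v = \sum_(i | P i) bf (F i) u v.
Proof. by rewrite /bf mulmx_sumr mulmx_suml summxE. Qed.

Lemma bf_QRQ N (Q R : 'M[C]_N) u v : Q^t* = Q -> bf (Q *m R *m Q) u v = bf R (Q *m u) (Q *m v).
Proof. by move=> HQ; rewrite /bf trmx_mul map_mxM /= HQ !mulmxA. Qed.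

Lemma bfBR N (A B : 'M[C]_N) u v : bf (A - B) u v = bf A u v - bf B u v.
Proof. by rewrite /bf mulmxBr mulmxBl [LHS]mxE [X in _ + X]mxE. Qed.

Lemma proj_comm N (J : finType) (Q : J -> 'M[C]_N) R : psdm R ->
  (forall j, Q j *m Q j = Q j) -> (forall j, (Q j)^t* = Q j) ->
  R = \sum_j Q j *m R *m Q j -> forall j, Q j *m R = R *m Q j.
Proof.
move=> H Qi Qh RE j.
set R' := \sum_(i | i != j) Q i *m R *m Q i.
have R'E : R' = R - Q j *m R *m Q j.
  by rewrite {1}RE (bigD1 j) //= addrAC subrr add0r.
have R'p : psdm R'.
  move=> v; rewrite bf_sumR; apply: sumr_ge0 => i _.
  by rewrite bf_QRQ //; apply: H.
have R'Q : R' *m Q j = 0.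
  apply/matrixP => a k; rewrite [RHS]mxE.
  have := psdm_null R'p (v := Q j *m delta_mx k 0).
  rewrite {1}R'E bfBR bf_QRQ // !mulmxA Qi subrr => /(_ erefl) E.
  by move/matrixP: E => /(_ a 0); rewrite -colE [LHS]mxE [RHS]mxE.
have RQ : R *m Q j = Q j *m R *m Q j.
  by apply/eqP; rewrite -subr_eq0 -R'Q R'E mulmxBl -(mulmxA _ (Q j) (Q j)) Qi.
have QR : Q j *m R = Q j *m R *m Q j.
  have := congr1 (fun M => M^t* ) RQ.
  by rewrite !trmx_mul !map_mxM /= Qh psdm_trC // mulmxA.
by rewrite QR RQ.
Qed.

Lemma bfE N (R : 'M[C]_N) (v : 'cV[C]_N) :
  bf R v v = \sum_i \sum_j (v i 0)^* * R i j * v j 0.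
Proof.
rewrite /bf mxE (exchange_big) /=; apply: eq_bigr => j _.
rewrite mxE mulr_suml; apply: eq_bigr => i _.
by rewrite !mxE.
Qed.

Lemma sum_ev (X : finType) (F : X -> C) :
  \sum_(x : X) F x = \sum_(i < #|X|) F (enum_val i).
Proof.
rewrite (reindex (@enum_val X predT)) //.
by exists enum_rank => x _; [exact: enum_valK | exact: enum_rankK].
Qed.
Lemma sum_ev2 (X : finType) (F : X -> X -> C) :
  \sum_(x : X) \sum_(y : X) F x y = \sum_(i < #|X|) \sum_(j < #|X|) F (enum_val i) (enum_val j).
Proof. by rewrite sum_ev; apply: eq_bigr => i _; rewrite sum_ev. Qed.
Lemma sum_deltaI (X : finType) (x : X) (F : 'I_#|X| -> C) :
  \sum_c (enum_val c == x)%:R * F c = F (enum_rank x).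
Proof.
rewrite (bigD1 (enum_rank x)) //= enum_rankK eqxx mul1r big1 ?addr0 // => c ne.
have -> : (enum_val c == x) = false.
  by apply/eqP => E; move: ne; rewrite -E enum_valK eqxx.
by rewrite mul0r.
Qed.
Lemma sum_triple (A B E : finType) (F : A -> B -> E -> C) :
  \sum_(t : A * B * E) F t.1.1 t.1.2 t.2 = \sum_a \sum_b \sum_e F a b e.
Proof. by rewrite pair_bigA /= pair_bigA. Qed.

Lemma sum_delta_r D (F : 'I_D -> C) z : \sum_b F b * (b == z)%:R = F z.
Proof.
rewrite (bigD1 z) //= eqxx mulr1 big1 ?addr0 // => b /negbTE ->.
by rewrite mulr0.
Qed.
End Core.

Unset Implicit Arguments.
Local Open Scope sesquilinear_scope.
Theorem lemma1 (C : numClosedFieldType) (dA dB n k : nat)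
  (Pi : 'I_k -> 'M[C]_(dA * dB))
  (rho : word (dA * dB) n -> word (dA * dB) n -> C) :
  (forall i, orth_proj (Pi i)) ->
  psd rho ->
  perm_invariant rho ->
  iid_block_diag Pi rho ->
  exists Psi : pword (dA * dB) n -> C, purifies Psi rho /\ in_Sym Pi Psi.
Proof.
move=> HPi Hpsd Hperm Hiid.
set D := (dA * dB)%N in Pi rho HPi Hpsd Hperm Hiid *.
pose X := word D n.
pose N := #|X|.
pose R : 'M[C]_N := \matrix_(i, j) rho (enum_val i) (enum_val j).
have Ppsd : psdm R.
  move=> v; rewrite bfE.
  under eq_bigr do under eq_bigr do rewrite mxE.
  have H0 := Hpsd (fun x => v (enum_rank x) 0).
  rewrite sum_ev2 in H0; apply: (le_trans H0); rewrite le_eqVlt; apply/orP; left.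
  apply/eqP; apply: eq_bigr => i _; apply: eq_bigr => j _.
  by rewrite !enum_valK.
have HPh : forall i x y, (Pi i y x)^* = Pi i x y.
  move=> i x y; have /matrixP /(_ x y) := (HPi i).2.
  by rewrite !mxE.
have HPid : forall i x y, \sum_c Pi i x c * Pi i c y = Pi i x y.
  move=> i x y; have /matrixP /(_ x y) := (HPi i).1.
  by rewrite !mxE.
pose J := {ffun 'I_n -> 'I_k}.
pose Qm (j : J) : 'M[C]_N := \matrix_(a, b) tens_proj Pi j (enum_val a) (enum_val b).
have tpid : forall j x y, \sum_(z : X) tens_proj Pi j x z * tens_proj Pi j z y = tens_proj Pi j x y.
  move=> j x y; rewrite /tens_proj.
  under eq_bigr do rewrite -big_split /=.
  rewrite -(bigA_distr_bigA (fun i c => Pi (j i) (x i) c * Pi (j i) c (y i))) /=.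
  by apply: eq_bigr => i _; rewrite HPid.
have Qh : forall j, (Qm j)^t* = Qm j.
  move=> j; apply/matrixP => a b; rewrite !mxE /tens_proj rmorph_prod.
  by apply: eq_bigr => i _; apply: HPh.
have Qi : forall j, Qm j *m Qm j = Qm j.
  move=> j; apply/matrixP => a b; rewrite !mxE.
  under eq_bigr do rewrite !mxE.
  by rewrite -(sum_ev (fun z => tens_proj Pi j (enum_val a) z * tens_proj Pi j z (enum_val b))) tpid.
have RE : R = \sum_j Qm j *m R *m Qm j.
  apply/matrixP => a b; rewrite summxE [LHS]mxE Hiid.
  apply: eq_bigr => j _; rewrite sum_ev2.
  rewrite mxE exchange_big /=; apply: eq_bigr => d _; rewrite mxE mulr_suml.
  by apply: eq_bigr => c _; rewrite !mxE.
have Qc := proj_comm Ppsd Qi Qh RE.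
have [S [SS SM ST]] := psdm_sqrt Ppsd.
have SE : S = \sum_j Qm j *m S *m Qm j.
  have SQ : forall j, Qm j *m S = S *m Qm j by move=> j; apply: SM.
  have TR : (\sum_j Qm j - 1%:M) *m R = 0.
    rewrite mulmxBl mul1mx mulmx_suml {2}RE; apply/eqP; rewrite subr_eq0; apply/eqP.
    by apply: eq_bigr => j _; rewrite -mulmxA -Qc mulmxA Qi.
  have /eqP := ST _ TR; rewrite mulmxBl mul1mx subr_eq0 => /eqP TS.
  rewrite -{1}TS mulmx_suml; apply: eq_bigr => j _.
  by rewrite -mulmxA -SQ mulmxA Qi.
have Sperm : forall s x y, S (enum_rank (permw s x)) (enum_rank (permw s y))
                          = S (enum_rank x) (enum_rank y).
  move=> s.
  have K1 : forall x : X, permw s (permw s^-1 x) = x.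
    by move=> x; apply/ffunP => i; rewrite !ffunE permK.
  have K2 : forall x : X, permw s^-1 (permw s x) = x.
    by move=> x; apply/ffunP => i; rewrite !ffunE permKV.
  pose M : 'M[C]_N := \matrix_(a, b) (enum_val b == permw s (enum_val a))%:R.
  have E : forall (A : 'M[C]_N) a b, (M *m A) a b = A (enum_rank (permw s (enum_val a))) b.
    move=> A a b; rewrite mxE; under eq_bigr do rewrite mxE.
    exact: sum_deltaI.
  have E' : forall (A : 'M[C]_N) a b, (A *m M) a b = A a (enum_rank (permw s^-1 (enum_val b))).
    move=> A a b; rewrite mxE; under eq_bigr => c _ do rewrite mxE mulrC.
    rewrite -(sum_deltaI (permw s^-1 (enum_val b)) (fun c => A a c)).
    apply: eq_bigr => c _.
    have -> : (enum_val b == permw s (enum_val c)) = (enum_val c == permw s^-1 (enum_val b)) => //.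
    by apply/eqP/eqP => ->; rewrite ?K1 ?K2.
  have MR : M *m R = R *m M.
    apply/matrixP => a b; rewrite E E' !mxE !enum_rankK.
    by rewrite -[in LHS](K1 (enum_val b)) Hperm.
  have MS := SM M MR.
  move=> x y; have := congr1 (fun A : 'M[C]_N => A (enum_rank x) (enum_rank (permw s y))) MS.
  by rewrite /= E E' !enum_rankK K2.
pose fstw (a : pword D n) : X := [ffun i => (a i).1].
pose sndw (a : pword D n) : X := [ffun i => (a i).2].
have fp : forall x u, fstw (pairw x u) = x by move=> x u; apply/ffunP => i; rewrite !ffunE.
have sp : forall x u, sndw (pairw x u) = u by move=> x u; apply/ffunP => i; rewrite !ffunE.
exists (fun a => S (enum_rank (fstw a)) (enum_rank (sndw a))).
split.
  move=> x y; under eq_bigr do rewrite !fp !sp.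
  have E := congr1 (fun A : 'M[C]_N => A (enum_rank x) (enum_rank y)) SS.
  rewrite /= [RHS]mxE !enum_rankK in E.
  rewrite -E mxE [RHS]sum_ev; apply: eq_bigr => c _.
  by rewrite enum_valK !mxE.
split; last first.
  move=> s a /=.
  have -> : fstw (permw s a) = permw s (fstw a) by apply/ffunP => i; rewrite !ffunE.
  have -> : sndw (permw s a) = permw s (sndw a) by apply/ffunP => i; rewrite !ffunE.
  exact: Sperm.
pose T : finType := (J * X * X)%type.
pose ft (t : T) := tensn (fun i (p : 'I_D * 'I_D) => Pi (t.1.1 i) p.1 (t.1.2 i) * Pi (t.1.1 i) (t.2 i) p.2).
exists #|T|, (fun l => S (enum_rank (enum_val l).1.2) (enum_rank (enum_val l).2)),
  (fun l => ft (enum_val l)).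
split.
  move=> l; set t := enum_val l.
  exists (fun i (p : 'I_D * 'I_D) => Pi (t.1.1 i) p.1 (t.1.2 i) * Pi (t.1.1 i) (t.2 i) p.2).
  split => // i.
  exists 1%N, (fun _ => 1), (fun _ => tens2 (fun a => Pi (t.1.1 i) a (t.1.2 i)) (fun b => Pi (t.1.1 i) (t.2 i) b)).
  split; last by move=> p; rewrite big_ord1 mul1r.
  move=> _; exists (t.1.1 i), (fun a => Pi (t.1.1 i) a (t.1.2 i)), (fun b => Pi (t.1.1 i) (t.2 i) b).
  split; first by exists (fun b => (b == t.1.2 i)%:R) => a; rewrite sum_delta_r.
  split => //.
  exists (fun b => (b == t.2 i)%:R) => a; rewrite sum_delta_r mxE.
  by rewrite -HPh.
move=> a.
rewrite -(sum_ev (fun t : T => S (enum_rank t.1.2) (enum_rank t.2) * ft t a)).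
rewrite /ft (sum_triple (fun (j : J) (z w : X) => S (enum_rank z) (enum_rank w) *
   tensn (fun i (p : 'I_D * 'I_D) => Pi (j i) p.1 (z i) * Pi (j i) (w i) p.2) a)).
rewrite {1}SE summxE; apply: eq_bigr => j _.
rewrite sum_ev2 mxE exchange_big /=; apply: eq_bigr => d _.
rewrite mxE mulr_suml; apply: eq_bigr => c _.
rewrite !enum_valK !mxE !enum_rankK /tensn big_split /= /tens_proj.
have -> : \prod_(i < n) Pi (j i) (fstw a i) (enum_val c i) = \prod_(i < n) Pi (j i) (a i).1 (enum_val c i).
  by apply: eq_bigr => i _; rewrite ffunE.
have -> : \prod_(i < n) Pi (j i) (enum_val d i) (sndw a i) = \prod_(i < n) Pi (j i) (enum_val d i) (a i).2.
  by apply: eq_bigr => i _; rewrite ffunE.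
ring.
Qed.
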